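(* Let $K$ be a field, $b\ge2$ an integer, and $M=(m_{i,j})_{i,j\ge0}$ a non-degenerate $b$-autosimilar infinite matrix over $K$. Set $d_0=1$ and $d_k=\det(M(k+1))/\det(M(k))$ for $k=1,\dots,b-1$. Then for every $n\ge1$, $$\det(M(n))=\prod_{k=0}^{n-1}\ \prod_i d_{\kappa_i},$$ where $k=\sum_i\kappa_ib^i$ is the base-$b$ expansion of $k$ (digits $\kappa_i\in\{0,\dots,b-1\}$).
   Context: An infinite matrix $M=(m_{i,j})_{i,j\ge0}$ is $b$-autosimilar if $m_{0,0}=1$ and $m_{s,t}=\prod_i m_{\sigma_i,\tau_i}$ whenever $s=\sum_i\sigma_ib^i$, $t=\sum_i\tau_ib^i$ are base-$b$ expansions. $M(n)$ denotes the submatrix $(m_{i,j})_{0\le i,j<n}$. $M$ is non-degenerate if $\det(M(n))\neq0$ for $n=2,\dots,b$. *)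

(* Defs.v *)
From mathcomp Require Import all_boot all_algebra.
Set Implicit Arguments. Unset Strict Implicit. Unset Printing Implicit Defensive.
Import GRing.Theory.
Local Open Scope ring_scope.

Definition digit (b i s : nat) : nat := ((s %/ b ^ i) %% b)%N.

Definition subM (K : fieldType) (m : nat -> nat -> K) (n : nat) : 'M[K]_n :=
  \matrix_(i < n, j < n) m i j.

(* Digits of index > maxn s t are all 0 (since b >= 2), so indices
   i <= maxn s t cover the base-b expansions of both s and t
   (the extra factors are m 0 0 = 1). *)
Definition b_autosimilar (K : fieldType) (b : nat) (m : nat -> nat -> K) : Prop :=
  m 0%N 0%N = 1 /\
  forall s t : nat,
    m s t = \prod_(i < (maxn s t).+1) m (digit b i s) (digit b i t).

Definition b_nondegenerate (K : fieldType) (b : nat) (m : nat -> nat -> K) : Prop :=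
  forall n : nat, (2 <= n <= b)%N -> \det (subM m n) != 0.

Definition dcoef (K : fieldType) (m : nat -> nat -> K) (k : nat) : K :=
  if k == 0%N then 1 else \det (subM m k.+1) / \det (subM m k).

(* Main.v *)
Require Import Defs.
From mathcomp Require Import all_boot all_algebra.
Import GRing.Theory.
Local Open Scope ring_scope.

Section Aux.
Variable K : fieldType.

Definition Pd (b N : nat) (f : nat -> nat -> K) (s t : nat) : K :=
  \prod_(i < N) f (digit b i s) (digit b i t).

Lemma digit_big b i s : (s < b ^ i)%N -> digit b i s = 0%N.
Proof. by move=> h; rewrite /digit (divn_small h) mod0n. Qed.

Lemma Pd_pad_le b (f : nat -> nat -> K) N N' s t :
  (1 < b)%N -> f 0%N 0%N = 1 -> (N <= N')%N -> (s < b ^ N)%N -> (t < b ^ N)%N ->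
  Pd b N f s t = Pd b N' f s t.
Proof.
move=> b1 f00 NN' hs ht; rewrite /Pd.
rewrite -(big_mkord xpredT (fun i => f (digit b i s) (digit b i t))).
rewrite -(big_mkord xpredT (fun i => f (digit b i s) (digit b i t))).
rewrite [RHS](big_cat_nat (n:=N)) //=.
rewrite [X in _ = _ * X]big1_seq ?mulr1 //= => i; rewrite mem_index_iota => /andP[Ni _].
have bb : (b ^ N <= b ^ i)%N by apply: leq_pexp2l => //; apply: ltnW.
by rewrite !digit_big ?f00 //; apply: leq_trans bb.
Qed.

Lemma Pd_pad b (f : nat -> nat -> K) N N' s t :
  (1 < b)%N -> f 0%N 0%N = 1 -> (s < b ^ N)%N -> (t < b ^ N)%N ->
  (s < b ^ N')%N -> (t < b ^ N')%N ->
  Pd b N f s t = Pd b N' f s t.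
Proof.
move=> b1 f00 h1 h2 h3 h4; case: (leqP N N') => h.
  exact: Pd_pad_le.
by symmetry; apply: Pd_pad_le => //; apply: ltnW.
Qed.

Lemma PdS b (f : nat -> nat -> K) N s t :
  Pd b N.+1 f s t = f (s %% b)%N (t %% b)%N * Pd b N f (s %/ b)%N (t %/ b)%N.
Proof.
rewrite /Pd big_ord_recl /digit expn0 !divn1; congr (_ * _).
by apply: eq_bigr => i _; rewrite /= expnS !divnMA.
Qed.

Lemma Pd_trig b (f : nat -> nat -> K) N s t :
  (forall x y, (x < y)%N -> f x y = 0) -> (s < t)%N -> (t < b ^ N)%N -> Pd b N f s t = 0.
Proof.
move=> hf; elim: N s t => [|N IH] s t st.
  by rewrite expn0 ltnS leqn0 => /eqP ht; rewrite ht in st.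
move=> tb; rewrite PdS.
have b0 : (0 < b)%N by case: b tb {IH} => //; rewrite exp0n.
have : (s %/ b <= t %/ b)%N by apply: leq_div2r; apply: ltnW.
rewrite leq_eqVlt => /orP[/eqP e|lt].
  rewrite hf ?mul0r //.
  have := st; rewrite {1}(divn_eq s b) {1}(divn_eq t b) e ltn_add2l //.
by rewrite IH ?mulr0 // ltn_divLR // -expnSr.
Qed.

Lemma sum_split (F : nat -> K) a p :
  \sum_(0 <= r < a * p) F r = \sum_(0 <= q < p) \sum_(0 <= c < a) F (q * a + c)%N.
Proof.
elim: p => [|p IH]; first by rewrite muln0 !big_geq.
rewrite big_nat_recr //= -IH mulnS addnC (big_cat_nat (n:=(a*p)%N)) ?leq_addr //=.
congr (_ + _).
rewrite -{1}(add0n (a * p)%N) big_addn addKn; apply: eq_bigr => i _.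
by rewrite mulnC addnC.
Qed.

Lemma Pd_mul b (L U : nat -> nat -> K) N s t :
  (0 < b)%N ->
  \sum_(0 <= r < b ^ N) Pd b N L s r * Pd b N U r t =
  Pd b N (fun x y => \sum_(c < b) L x c * U c y) s t.
Proof.
move=> b0; elim: N s t => [|N IH] s t.
  by rewrite expn0 big_nat1 /Pd !big_ord0 mulr1.
rewrite PdS -IH expnS sum_split big_distrr /=; apply: eq_bigr => q _.
rewrite big_mkord big_distrl /=; apply: eq_bigr => c _; have cb := ltn_ord c.
rewrite !PdS modnMDl divnMDl // (modn_small cb) (divn_small cb) addn0.
by rewrite mulrACA.
Qed.


Lemma sum_pick n (v : 'I_n -> K) (i : 'I_n) :
  \sum_(j < n) (if (j == i :> nat) then v j else 0) = v i.
Proof.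
rewrite (bigD1 i) //= eqxx big1 ?addr0 // => j ji.
have -> : (j == i :> nat) = false.
  by apply/negbTE; apply: contra ji => /eqP h; apply/eqP; apply: val_inj.
done.
Qed.

Lemma trunc (a L U : nat -> nat -> K) n :
 (forall x y, (x < n)%N -> (y < n)%N -> a x y = \sum_(c < n) L x c * U c y) ->
 (forall x, (x < n)%N -> L x x = 1) ->
 (forall x y, (x < y)%N -> (y < n)%N -> L x y = 0) ->
 (forall x y, (y < x)%N -> (x < n)%N -> U x y = 0) ->
 forall k, (k <= n)%N -> \det (subM a k) = \prod_(c < k) U c c.
Proof.
move=> Ha HL1 HL0 HU0 k kn.
have -> : subM a k = (\matrix_(i<k, j<k) L i j) *m (\matrix_(i<k,j<k) U i j).
  apply/matrixP => i j; have ik := leq_trans (ltn_ord i) kn.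
  have jk := leq_trans (ltn_ord j) kn.
  rewrite !mxE Ha //.
  rewrite -(big_mkord xpredT (fun c => L i c * U c j)) (big_cat_nat (n:=k)) //= big_mkord.
  rewrite [X in _ + X]big1_seq ?addr0.
    by apply: eq_bigr => c _; rewrite !mxE.
  move=> c /andP[_]; rewrite mem_index_iota => /andP[kc cn].
  by rewrite HL0 ?mul0r //; apply: leq_trans (ltn_ord i) kc.
rewrite det_mulmx det_trig; last first.
  apply/is_trig_mxP => i j ij; rewrite mxE HL0 //.
  exact: leq_trans (ltn_ord j) kn.
rewrite -det_tr det_trig; last first.
  apply/is_trig_mxP => i j ij; rewrite !mxE HU0 //.
  exact: leq_trans (ltn_ord j) kn.
rewrite big1 ?mul1r; last first.
  by move=> i _; rewrite mxE HL1 //; apply: leq_trans (ltn_ord i) kn.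
by apply: eq_bigr => i _; rewrite !mxE.
Qed.

Lemma LU_exists (a : nat -> nat -> K) n :
 (forall k, (k < n)%N -> \det (subM a k) != 0) ->
 exists L U : nat -> nat -> K,
  [/\ forall x y, (x < n)%N -> (y < n)%N -> a x y = \sum_(c < n) L x c * U c y,
      forall x, L x x = 1,
      forall x y, (x < y)%N -> L x y = 0 &
      forall x y, (y < x)%N -> U x y = 0].
Proof.
elim: n => [|n IH] hdet.
  exists (fun x y => (x == y)%:R), (fun _ _ => 0); split => //.
  - by move=> x; rewrite eqxx.
  - by move=> x y xy; rewrite ltn_eqF.
have [L [U [Ha HL1 HL0 HU0]]] : exists L U : nat -> nat -> K,
  [/\ forall x y, (x < n)%N -> (y < n)%N -> a x y = \sum_(c < n) L x c * U c y,
      forall x, L x x = 1,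
      forall x y, (x < y)%N -> L x y = 0 &
      forall x y, (y < x)%N -> U x y = 0].
  by apply: IH => k kn; apply: hdet; apply: ltnW.
pose Lm : 'M[K]_n := \matrix_(i, j) L i j.
pose Um : 'M[K]_n := \matrix_(i, j) U i j.
have hLU : Lm *m Um = subM a n.
  by apply/matrixP => i j; rewrite !mxE Ha //; apply: eq_bigr => c _; rewrite !mxE.
have Lunit : Lm \in unitmx.
  rewrite unitmxE det_trig; last by apply/is_trig_mxP => i j ij; rewrite mxE HL0.
  by rewrite big1 ?unitr1 // => i _; rewrite mxE HL1.
have detL : \det Lm = 1.
  rewrite det_trig; last by apply/is_trig_mxP => i j ij; rewrite mxE HL0.
  by rewrite big1 // => i _; rewrite mxE HL1.
have Uunit : Um \in unitmx.
  have := hdet n (ltnSn n); rewrite -hLU det_mulmx detL mul1r => h.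
  by rewrite unitmxE unitfE.
pose colv : 'cV[K]_n := \col_i a i n.
pose rowv : 'rV[K]_n := \row_j a n j.
pose uv := invmx Lm *m colv.
pose lv := rowv *m invmx Um.
have Huv : Lm *m uv = colv by rewrite mulKVmx.
have Hlv : lv *m Um = rowv by rewrite mulmxKV.
pose uf c := \sum_(i < n) (if (i == c :> nat) then uv i 0 else 0).
pose lf c := \sum_(i < n) (if (i == c :> nat) then lv 0 i else 0).
pose d := a n n - \sum_(c < n) lf c * uf c.
have ufE : forall c : 'I_n, uf c = uv c 0 by move=> c; exact: (@sum_pick n (fun i => uv i 0)).
have lfE : forall c : 'I_n, lf c = lv 0 c by move=> c; exact: (@sum_pick n (fun i => lv 0 i)).
have Huf : forall x, (x < n)%N -> \sum_(c < n) L x c * uf c = a x n.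
  move=> x xn; transitivity ((Lm *m uv) (Ordinal xn) 0); last by rewrite Huv mxE.
  by rewrite [RHS]mxE; apply: eq_bigr => c _; rewrite ufE [Lm _ _]mxE.
have Hlf : forall y, (y < n)%N -> \sum_(c < n) lf c * U c y = a n y.
  move=> y yn; transitivity ((lv *m Um) 0 (Ordinal yn)); last by rewrite Hlv mxE.
  by rewrite [RHS]mxE; apply: eq_bigr => c _; rewrite lfE [Um _ _]mxE.
have Hd : a n n = \sum_(c < n) lf c * uf c + d by rewrite /d addrC subrK.
clearbody uf lf d.
exists (fun x y => if x == n then (if (y < n)%N then lf y else if y == n then 1 else 0)
                   else L x y).
exists (fun x y => if y == n then (if (x < n)%N then uf x else if x == n then d else 0)
                   else U x y).
apply: And4.
- move=> x y; rewrite ltnS leq_eqVlt => /orP[/eqP->|xn]; rewrite ltnS leq_eqVlt => /orP[/eqP->|yn];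
    rewrite big_ord_recr /= ?eqxx ?ltnn.
  + rewrite mul1r Hd; congr (_ + _); apply: eq_bigr => c _.
    by rewrite (ltn_ord c).
  + rewrite (ltn_eqF yn) /= HU0 // mulr0 addr0 -Hlf //; apply: eq_bigr => c _.
    by rewrite (ltn_ord c).
  + rewrite (ltn_eqF xn) /= HL0 // mul0r addr0 -Huf //; apply: eq_bigr => c _.
    by rewrite (ltn_ord c).
  + by rewrite (ltn_eqF xn) (ltn_eqF yn) /= HL0 // mul0r addr0 Ha.
- by move=> x; case: eqP => // ->; rewrite ltnn ?eqxx.
- move=> x y xy; case: eqP => [xn|]; last by rewrite HL0.
  by rewrite xn in xy; rewrite ltnNge (ltnW xy) /= gtn_eqF.
- move=> x y yx; case: eqP => [yn|]; last by rewrite HU0.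
  by rewrite yn in yx; rewrite ltnNge (ltnW yx) /= gtn_eqF.
Qed.

End Aux.
Arguments Pd {K}.

Theorem corollary2p2 (K : fieldType) (b : nat) (m : nat -> nat -> K) :
  (2 <= b)%N -> b_autosimilar b m -> b_nondegenerate b m ->
  forall n : nat, (1 <= n)%N ->
    \det (subM m n) =
      \prod_(k < n) \prod_(i < k.+1) dcoef m (digit b i k).
Proof.
move=> b2 [m00 Hm] hnd n n1.
have b0 : (0 < b)%N by apply: leq_trans b2.
have det1 : \det (subM m 1) = 1 by rewrite det_mx11 mxE.
have hnz : forall k, (k < b)%N -> \det (subM m k) != 0.
  case=> [|[|k]] kb; first by rewrite det_mx00 oner_neq0.
    by rewrite det1 oner_neq0.
  by apply: hnd; apply/andP; split => //; exact: ltnW.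
have [L [U [Ha HL1 HL0 HU0]]] := @LU_exists K m b hnz.
have hdetA := @trunc K m L U b Ha (fun x _ => HL1 x) (fun x y xy _ => HL0 x y xy)
  (fun x y yx _ => HU0 x y yx).
have d0 : dcoef m 0 = 1 by [].
have dS : forall k, dcoef m k.+1 = \det (subM m k.+2) / \det (subM m k.+1) by [].
have Udiag : forall c, (c < b)%N -> U c c = dcoef m c.
  case=> [|c] cb.
    by have := hdetA 1%N (ltnW b2); rewrite det1 big_ord1 d0 => <-.
  have e2 := hdetA c.+2 cb; have e1 := hdetA c.+1 (ltnW cb).
  rewrite dS e2 e1 big_ord_recr /= mulrAC mulfV ?mul1r //.
  by rewrite -e1; exact: hnz _ cb.
have bN : (n < b ^ n)%N by exact: (ltn_expl n b2).
have Pd_m : forall x y, (x < b ^ n)%N -> (y < b ^ n)%N ->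
    m x y = \sum_(c < (b ^ n)%N) Pd b n L x c * Pd b n U c y.
  move=> x y xb yb; rewrite Hm.
  have hx : (x < b ^ (maxn x y).+1)%N.
    apply: leq_trans (ltn_expl x b2) _; apply: leq_pexp2l => //.
    exact: leq_trans (leq_maxl x y) (leqnSn _).
  have hy : (y < b ^ (maxn x y).+1)%N.
    apply: leq_trans (ltn_expl y b2) _; apply: leq_pexp2l => //.
    exact: leq_trans (leq_maxr x y) (leqnSn _).
  rewrite -/(Pd b (maxn x y).+1 m x y) (@Pd_pad K b m _ n) //.
  rewrite -[RHS](big_mkord xpredT (fun c => Pd b n L x c * Pd b n U c y)) Pd_mul //.
  rewrite /Pd; apply: eq_bigr => i _.
  by rewrite Ha // ltn_pmod.
rewrite (@trunc K m _ _ (b ^ n)%N Pd_m _ _ _ n (ltnW bN)).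
- apply: eq_bigr => c _.
  have cb : (c < b ^ n)%N by apply: ltn_trans bN.
  transitivity (Pd b n (fun p _ => dcoef m p) c c).
    by rewrite /Pd; apply: eq_bigr => i _; rewrite Udiag // ltn_pmod.
  have cc : (c < b ^ c.+1)%N.
    by apply: leq_trans (ltn_expl c b2) _; apply: leq_pexp2l => //; apply: ltnW.
  by rewrite (@Pd_pad K b _ n c.+1).
- by move=> x _; rewrite /Pd big1 // => i _; rewrite HL1.
- by move=> x y xy yb; apply: Pd_trig.
- move=> x y yx xb.
  exact: (@Pd_trig K b (fun p q => U q p) n y x (fun p q pq => HU0 q p pq) yx xb).
Qed.
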